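(* Let $0\le\tau\le\varepsilon$, $\lambda:=\tau/\varepsilon$, $u_n\in\mathcal V_{[0,1]}$, and suppose $u_{n+1}\in\mathcal V$ and $\beta_{n+1}\in\mathcal B(u_{n+1})$ satisfy \[ u_{n+1} -e^{-\tau\Delta}u_n-\lambda u_{n+1}+\lambda\overline{u_{n+1}}\mathbf{1} =\lambda\beta_{n+1} -\lambda\overline{\beta_{n+1}}\mathbf{1}. \] Then $u_{n+1}$ is a minimiser of \[ \lambda\langle u,\mathbf{1} -u \rangle_{\mathcal V} + \|u-e^{-\tau\Delta}u_n\|^2_{\mathcal V} \] over $\{u\in\mathcal V_{[0,1]}:\mathcal M(u)=\mathcal M(u_n)\}$; on this set this objective equals $(1-\lambda)\|u\|^2_{\mathcal V}-2\langle u,e^{-\tau\Delta}u_n\rangle_{\mathcal V}$ plus a constant independent of $u$. In particular, when $\tau=\varepsilon$, $u_{n+1}$ maximises $\langle u,e^{-\tau\Delta}u_n\rangle_{\mathcal V}$ over $\{u\in\mathcal V_{[0,1]}:\mathcal M(u)=\mathcal M(u_n)\}$, i.e. $u_{n+1}$ is an update of the mass-conserving graph MBO scheme.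
   Context: $G=(V,E)$ is a finite, simple, connected, undirected graph with weights $\omega_{ij}=\omega_{ji}>0$ for $ij\in E$, $\omega_{ij}=0$ otherwise; $d_i=\sum_j\omega_{ij}$, $r\in[0,1]$ fixed. $\mathcal V$ = functions $V\to\mathbb R$ with $\langle u,v\rangle_{\mathcal V}=\sum_i u_iv_id_i^r$ and norm $\|\cdot\|_{\mathcal V}$; $\mathcal V_X$ = functions $V\to X$. $(\Delta u)_i=d_i^{-r}\sum_j\omega_{ij}(u_i-u_j)$; $e^{-\tau\Delta}$ is the matrix exponential. $\mathbf 1$ all-ones; $\mathcal M(u)=\langle u,\mathbf 1\rangle_{\mathcal V}$; $\bar v=\mathcal M(v)/\mathcal M(\mathbf 1)$. $\varepsilon>0$. For $u\in\mathcal V_{[0,1]}$, $\mathcal B(u)$ = set of $\beta\in\mathcal V$ with $\beta_i\ge0$ if $u_i=0$, $\beta_i=0$ if $0<u_i<1$, $\beta_i\le0$ if $u_i=1$; $\mathcal B(u)=\emptyset$ otherwise. The mass-conserving graph MBO scheme is defined by $u_{n+1}\in\operatorname{argmin}\{\langle\mathbf 1-2e^{-\tau\Delta}u_n,u\rangle_{\mathcal V}: u\in\mathcal V_{[0,1]},\ \mathcal M(u)=\mathcal M(u_n)\}$. *)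

(* Defs.v *)
From HB Require Import structures.
From mathcomp Require Import all_boot all_order all_algebra.
From mathcomp Require Import all_classical all_reals all_analysis.
Set Implicit Arguments. Unset Strict Implicit. Unset Printing Implicit Defensive.
Import Order.TTheory GRing.Theory Num.Theory.
Local Open Scope ring_scope.

Definition weighted_graph (R : realType) (n : nat) (w : 'M[R]_n) : Prop :=
  (forall i j, w i j = w j i) /\ (forall i j, 0 <= w i j) /\ (forall i, w i i = 0)
  /\ (forall i j, connect (fun a b => 0 < w a b) i j).

Definition deg (R : realType) n (w : 'M[R]_n) (i : 'I_n) : R := \sum_j w i j.

(* the graph Laplacian as a matrix: (Delta u)_i = d_i^{-r} sum_j w_ij (u_i - u_j) *)
Definition laplacian (R : realType) n (w : 'M[R]_n) (r : R) : 'M[R]_n :=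
  \matrix_(i, j) ((deg w i `^ r)^-1 * ((i == j)%:R * deg w i - w i j)).

Definition expmx (R : realType) n (A : 'M[R]_n) : 'M[R]_n :=
  limn (series (fun k : nat => (k`!%:R)^-1 *: A ^+ k)).

Definition heat (R : realType) n (w : 'M[R]_n) (r tau : R) (u : 'I_n -> R) : 'I_n -> R :=
  fun i => \sum_j expmx (- tau *: laplacian w r) i j * u j.

Definition ip (R : realType) n (w : 'M[R]_n) (r : R) (u v : 'I_n -> R) : R :=
  \sum_i u i * v i * deg w i `^ r.

Definition sqnorm (R : realType) n (w : 'M[R]_n) (r : R) (u : 'I_n -> R) : R := ip w r u u.

Definition one_fn (R : realType) n : 'I_n -> R := fun _ => 1.

Definition mass (R : realType) n (w : 'M[R]_n) (r : R) (u : 'I_n -> R) : R :=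
  ip w r u (@one_fn R n).

Definition bar (R : realType) n (w : 'M[R]_n) (r : R) (u : 'I_n -> R) : R :=
  mass w r u / mass w r (@one_fn R n).

Definition in01 (R : realType) n (u : 'I_n -> R) : Prop := forall i, 0 <= u i <= 1.

Definition inB (R : realType) n (u beta : 'I_n -> R) : Prop :=
  in01 u /\ forall i, (u i = 0 -> 0 <= beta i) /\ (0 < u i < 1 -> beta i = 0)
                      /\ (u i = 1 -> beta i <= 0).

Definition admissible (R : realType) n (w : 'M[R]_n) (r : R) (u0 u : 'I_n -> R) : Prop :=
  in01 u /\ mass w r u = mass w r u0.

Definition MBO_update (R : realType) n (w : 'M[R]_n) (r tau : R) (un u' : 'I_n -> R) : Prop :=
  admissible w r un u' /\
  forall u, admissible w r un u ->
    ip w r (fun i => 1 - 2 * heat w r tau un i) u' <= ip w r (fun i => 1 - 2 * heat w r tau un i) u.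

(* Main.v *)
Require Import Defs.
From HB Require Import structures.
From mathcomp Require Import all_boot all_order all_algebra.
From mathcomp Require Import all_classical all_reals all_analysis.
From mathcomp Require Import ring lra.
Set Implicit Arguments. Unset Strict Implicit.
Import Order.TTheory GRing.Theory Num.Theory.
HB.instance Definition _ (R : realType) (n m : nat) := NormedModule.on 'M[R]_(n,m).
Local Open Scope classical_set_scope.
Local Open Scope ring_scope.

Ltac combine := repeat (rewrite -sumrB || rewrite -big_split /=).

Section S.
Variable R : realType.

Lemma entry_le n (M : 'M[R]_n) i j : `|M i j| <= `|M|.
Proof.
rewrite (_ : `|M| = mx_norm M) // mx_normrE; apply/bigmax_geP; right => /=; by exists (i, j).
Qed.

Lemma norm_le n (M : 'M[R]_n) c : 0 <= c -> (forall i j, `|M i j| <= c) -> `|M| <= c.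
Proof.
move=> c0 H; rewrite (_ : `|M| = mx_norm M) // mx_normrE; apply/bigmax_leP; split => // -[i j] _; apply: H.
Qed.

Lemma norm_mul n (A B : 'M[R]_n) : `|A *m B| <= n%:R * `|A| * `|B|.
Proof.
apply: norm_le; first by rewrite mulr_ge0 // mulr_ge0.
move=> i j; rewrite mxE; apply: le_trans (ler_norm_sum _ _ _) _.
have -> : n%:R * `|A| * `|B| = \sum_(k < n) `|A| * `|B|.
  by rewrite sumr_const card_ord -mulrA mulr_natl.
apply: ler_sum => k _; rewrite normrM ler_pM ?entry_le //.
Qed.

Lemma norm_pow n (A : 'M[R]_n) k : `|A ^+ k| <= (n%:R * `|A|) ^+ k.
Proof.
elim: k => [|k IH].
  rewrite expr0; apply: norm_le => // i j; rewrite mxE.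
  by case: (i == j) => /=; rewrite normr_nat.
rewrite [A ^+ _.+1]exprS [X in _ <= X]exprS -mulmxE.
have H := norm_mul A (A ^+ k).
apply: le_trans H _.
by apply: ler_wpM2l => //; rewrite mulr_ge0.
Qed.

Lemma exp_cvg n (A : 'M[R]_n) : cvgn (series (fun k : nat => (k`!%:R)^-1 *: A ^+ k)).
Proof.
apply: normed_cvg.
apply: (@series_le_cvg _ _ (exp_coeff (n%:R * `|A|))).
- by move=> k /=.
- by move=> k; apply: exp_coeff_ge0; rewrite mulr_ge0.
- move=> k /=; rewrite normrZ ger0_norm ?invr_ge0 // /exp_coeff /= mulrC.
  by apply: ler_wpM2r; [rewrite invr_ge0 | apply: norm_pow].
- exact: is_cvg_series_exp_coeff.
Qed.

Lemma lap_col n (w : 'M[R]_n) r : weighted_graph w ->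
  forall p, \sum_i deg w i `^ r * laplacian w r i p = 0.
Proof.
case=> sym [nn _] p.
transitivity (\sum_i ((i == p)%:R * deg w i - w i p)).
  apply: eq_bigr => i _; rewrite mxE.
  have [m0|m0] := eqVneq (deg w i `^ r) 0.
    have d0 := powR_eq0_eq0 m0.
    have wi0 : forall j, w i j = 0.
      move=> j; move: d0; rewrite /deg => /psumr_eq0P H; apply: H => // k _.
    by rewrite m0 mul0r d0 wi0 mulr0 subr0.
  by rewrite mulrA mulfV // mul1r.
rewrite sumrB (bigD1 p) //= eqxx mul1r big1 ?addr0; last by move=> i /negPf ->; rewrite mul0r.
rewrite /deg; under eq_bigr do rewrite sym.
by rewrite subrr.
Qed.

Lemma A_col n (w : 'M[R]_n) r tau : weighted_graph w ->
  forall p, \sum_i deg w i `^ r * (- tau *: laplacian w r) i p = 0.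
Proof.
move=> wg p; under eq_bigr do rewrite mxE mulrCA.
by rewrite -mulr_sumr lap_col // mulr0.
Qed.

Lemma pow_col n (w : 'M[R]_n) r tau : weighted_graph w ->
  forall k j, \sum_i deg w i `^ r * ((- tau *: laplacian w r) ^+ k) i j = (k == 0)%:R * deg w j `^ r.
Proof.
move=> wg [|k] j /=.
  rewrite mul1r expr0 (bigD1 j) //= mxE eqxx mulr1 big1 ?addr0 // => i /negPf ne.
  by rewrite mxE ne mulr0.
rewrite mul0r exprS -mulmxE.
under eq_bigr do rewrite mxE mulr_sumr.
rewrite exchange_big /=; apply: big1 => p _.
under eq_bigr do rewrite mulrA.
by rewrite -mulr_suml A_col // mul0r.
Qed.

Lemma series_col n (w : 'M[R]_n) r tau : weighted_graph w ->
  forall k j, (0 < k)%N ->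
  \sum_i deg w i `^ r * (series (fun k : nat => (k`!%:R)^-1 *: (- tau *: laplacian w r) ^+ k) k) i j
  = deg w j `^ r.
Proof.
move=> wg [//|k] j _ /=.
under eq_bigr do rewrite summxE mulr_sumr.
rewrite exchange_big /= big_nat_recl //.
under [X in _ + X = _]eq_bigr do (under eq_bigr do rewrite mxE mulrCA; rewrite -mulr_sumr pow_col //).
rewrite [X in _ + X]big1 ?addr0; last by move=> i _; rewrite mul0r mulr0.
under eq_bigr do rewrite mxE mulrCA.
by rewrite -mulr_sumr pow_col //= fact0 invr1 !mul1r.
Qed.

Lemma expmx_col n (w : 'M[R]_n) r tau : weighted_graph w ->
  forall j, \sum_i deg w i `^ r * expmx (- tau *: laplacian w r) i j = deg w j `^ r.
Proof.
move=> wg j.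
set u := (fun k : nat => (k`!%:R)^-1 *: (- tau *: laplacian w r) ^+ k).
have cS : cvgn (series u) := @exp_cvg n (- tau *: laplacian w r).
have H1 : (fun k => \sum_i deg w i `^ r * series u k i j) @ \oo -->
          \sum_i deg w i `^ r * expmx (- tau *: laplacian w r) i j.
  apply: (cvg_big (op := +%R)) => //; first exact: add_continuous.
  move=> i _; apply: cvgMl_tmp.
  apply: (cvg_comp (series u) (fun M : 'M[R]_n => M i j) cS). exact: coord_continuous.
have H2 : (fun k => \sum_i deg w i `^ r * series u k i j) @ \oo --> deg w j `^ r.
  apply: cvg_near_cst; near=> k; apply: series_col => //.
  by near: k; exists 1%N.
exact: (cvg_unique _ H1 H2).
Unshelve. all: by end_near.
Qed.

Lemma mass_heat n (w : 'M[R]_n) r tau un : weighted_graph w ->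
  mass w r (heat w r tau un) = mass w r un.
Proof.
move=> wg; rewrite /mass /ip /heat /one_fn.
under eq_bigr do rewrite mulr1 mulr_suml.
rewrite exchange_big /=; apply: eq_bigr => j _.
rewrite -(@expmx_col n w r tau wg j) mulr1 mulr_sumr; apply: eq_bigr => i _.
by ring.
Qed.

Lemma barM n (w : 'M[R]_n) r u : bar w r u * mass w r (@one_fn R n) = mass w r u.
Proof.
have [M0|M0] := eqVneq (mass w r (@one_fn R n)) 0; last by rewrite /bar divfK.
have m0 : forall i, deg w i `^ r = 0.
  move: (M0); rewrite /mass /ip /one_fn.
  under eq_bigr do rewrite mul1r.
  move/psumr_eq0P => H i; rewrite -[deg w i `^ r]mul1r; apply: H => // k _; rewrite mul1r powR_ge0 //.
rewrite M0 mulr0 /mass /ip big1 // => i _; by rewrite m0 mulr0.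
Qed.


Definition Fobj n (w : 'M[R]_n) r (lam : R) (h u : 'I_n -> R) :=
  lam * ip w r u (fun i => 1 - u i) + sqnorm w r (fun i => u i - h i).

Section Core.
Variables (n : nat) (w : 'M[R]_n) (r lam : R) (h un u1 beta : 'I_n -> R).
Hypothesis lam01 : 0 <= lam <= 1.
Hypothesis hB : inB u1 beta.
Hypothesis hmass : mass w r h = mass w r un.
Hypothesis heq : forall i, u1 i - h i - lam * u1 i + lam * bar w r u1
             = lam * beta i - lam * bar w r beta.

Let Hh i : h i = u1 i - lam * u1 i + lam * bar w r u1 - lam * beta i + lam * bar w r beta.
Proof. have := heq i; lra. Qed.

Lemma core_mass : mass w r u1 = mass w r un.
Proof.
rewrite -hmass.
have E1 : mass w r u1 - mass w r h - lam * mass w r u1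
   + lam * (bar w r u1 * mass w r (@one_fn R n))
   - (lam * mass w r beta - lam * (bar w r beta * mass w r (@one_fn R n))) = 0.
  rewrite /mass /ip /one_fn ?mulr_sumr; combine.
  apply: big1 => i _; rewrite (Hh i); ring.
by move: E1; rewrite !barM; lra.
Qed.

Lemma core_repr u : admissible w r un u ->
  Fobj w r lam h u = (1 - lam) * sqnorm w r u - 2 * ip w r u h + (lam * mass w r un + sqnorm w r h).
Proof.
case=> _ <-; apply/eqP; rewrite -subr_eq0; apply/eqP.
rewrite /Fobj /sqnorm /mass /ip /one_fn ?mulr_sumr; combine.
by apply: big1 => i _; ring.
Qed.

Lemma beta_term u i : in01 u -> 0 <= beta i * (u i - u1 i).
Proof.
case: hB => h01 hb /(_ i) /andP [a0 a1].
case/(_ i): hb => b0 [bm b1]; case/andP: (h01 i) => c0 c1.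
have [e0|ne0] := eqVneq (u1 i) 0.
  by rewrite e0 subr0 mulr_ge0 // b0.
have [e1|ne1] := eqVneq (u1 i) 1.
  by rewrite e1 mulr_le0 // ?b1 // subr_le0.
by rewrite bm ?mul0r // lt_neqAle eq_sym ne0 c0 lt_neqAle ne1 c1.
Qed.

Lemma core_min u : admissible w r un u -> Fobj w r lam h u1 <= Fobj w r lam h u.
Proof.
move=> [u01 Mu]; case/andP: lam01 => l0 l1.
set D := \sum_i deg w i `^ r * ((1 - lam) * (u i - u1 i) ^+ 2 + 2 * lam * (beta i * (u i - u1 i))).
set K := lam - 2 * lam * (bar w r u1 + bar w r beta).
have E : Fobj w r lam h u - Fobj w r lam h u1 - D - K * (mass w r u - mass w r u1) = 0.
  rewrite /D /Fobj /sqnorm /mass /ip /one_fn ?mulr_sumr; combine.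
  rewrite mulr_sumr; combine.
  by apply: big1 => i _; rewrite (Hh i) /K; ring.
have D0 : 0 <= D.
  apply: sumr_ge0 => i _; apply: mulr_ge0; first exact: powR_ge0.
  apply: addr_ge0; first by apply: mulr_ge0; [lra | exact: sqr_ge0].
  by apply: mulr_ge0; [lra | exact: beta_term].
move: E; rewrite Mu core_mass subrr mulr0 subr0; lra.
Qed.
End Core.
End S.

Theorem theorem13 (R : realType) (n : nat) (w : 'M[R]_n) (r eps tau : R)
  (un u1 beta : 'I_n -> R) :
  (0 < n)%N -> weighted_graph w -> 0 <= r <= 1 -> 0 < eps -> 0 <= tau <= eps ->
  in01 un -> inB u1 beta ->
  (forall i, u1 i - heat w r tau un i - tau / eps * u1 i + tau / eps * bar w r u1
             = tau / eps * beta i - tau / eps * bar w r beta) ->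
  let lam := tau / eps in
  let F := fun u : 'I_n -> R =>
    lam * ip w r u (fun i => 1 - u i) + sqnorm w r (fun i => u i - heat w r tau un i) in
  [/\ admissible w r un u1 /\ (forall u, admissible w r un u -> F u1 <= F u),
      (exists C : R, forall u, admissible w r un u ->
          F u = (1 - lam) * sqnorm w r u - 2 * ip w r u (heat w r tau un) + C)
    & (tau = eps ->
         (forall u, admissible w r un u -> ip w r u (heat w r tau un) <= ip w r u1 (heat w r tau un))
         /\ MBO_update w r tau un u1)].
Proof.
move=> _ wg _ eps0 /andP[t0 te] hun hB heq lam F.
have lam01 : 0 <= lam <= 1.
  by rewrite /lam divr_ge0 ?(ltW eps0) //= ler_pdivrMr // mul1r.
have hm := @mass_heat R n w r tau un wg.
have adm1 : admissible w r un u1.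
  by split; [case: hB | exact: (core_mass (lam := lam) hm heq)].
have Fmin : forall u, admissible w r un u -> F u1 <= F u.
  by move=> u hu; exact: (core_min (lam := lam) lam01 hB hm heq hu).
have Frep : forall u, admissible w r un u ->
    F u = (1 - lam) * sqnorm w r u - 2 * ip w r u (heat w r tau un)
          + (lam * mass w r un + sqnorm w r (heat w r tau un)).
  by move=> u hu; exact: (core_repr lam (heat w r tau un) hu).
split => //; first by exists (lam * mass w r un + sqnorm w r (heat w r tau un)).
move=> te'.
have l1 : lam = 1 by rewrite /lam te' divff // gt_eqF.
have Hip : forall u, admissible w r un u ->
    ip w r u (heat w r tau un) <= ip w r u1 (heat w r tau un).
  move=> u hu; have := Fmin u hu; rewrite (Frep u hu) (Frep u1 adm1) l1 subrr !mul0r.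
  lra.
split => //; split => // u hu.
have Ip : forall v, ip w r (fun i => 1 - 2 * heat w r tau un i) v
                    = mass w r v - 2 * ip w r v (heat w r tau un).
  move=> v; apply/eqP; rewrite -subr_eq0; apply/eqP.
  rewrite /mass /ip /one_fn ?mulr_sumr; combine.
  by apply: big1 => i _; ring.
rewrite !Ip; case: (hu) => _ ->; case: (adm1) => _ ->.
have := Hip u hu; lra.
Qed.
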